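(* Let $p\in(0,1)$ and $\varepsilon>0$. Let $n<m$ be positive integers with $b=n/m$. With probability $1-\exp(-\Omega_\varepsilon(n))$, a random linear rank metric code $\mathcal{C}\subseteq\mathbb{F}_2^{m\times n}$ of rate $R=(1-p)(1-bp)-\varepsilon$ satisfies $S_{\mathcal{C}}\le2$.
   Context: $\mathcal{B}_R(X,pn)=\{Z\in\mathbb{F}_2^{m\times n}:\mathrm{rank}(X-Z)\le pn\}$; $L_{\mathcal{C}}(X)=|\mathcal{B}_R(X,pn)\cap\mathcal{C}|$; $A_{\mathcal{C}}(X)=2^{\frac{\varepsilon}{1+\varepsilon}nL_{\mathcal{C}}(X)}$; $S_{\mathcal{C}}=\mathbb{E}_{X\sim\mathbb{F}_2^{m\times n}}[A_{\mathcal{C}}(X)]$ ($X$ uniform). A random linear rank metric code of rate $R$ is $\mathrm{span}_{\mathbb{F}_2}(Y_1,\dots,Y_k)$ with $k=Rmn$ (an integer) and $Y_i$ independent uniform in $\mathbb{F}_2^{m\times n}$. The statement is for $m,n$ sufficiently large. *)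

(* Defs.v *)
From HB Require Import structures.
From mathcomp Require Import all_boot all_order all_algebra all_field.
From Stdlib Require Import Reals.
Set Implicit Arguments. Unset Strict Implicit. Unset Printing Implicit Defensive.

Notation F2 := 'F_2.
Notation mat m n := 'M[F2]_(m, n).

(* A random linear code is given by its k generators Y_1..Y_k. *)
Definition gens (m n k : nat) := {ffun 'I_k -> mat m n}.

Section Lin.
Local Open Scope ring_scope.
Definition lincomb (m n k : nat) (Y : gens m n k) (c : {ffun 'I_k -> F2}) : mat m n :=
  \sum_(i < k) c i *: Y i.
Definition rk_diff (m n : nat) (X Z : mat m n) : nat := \rank (X - Z).
End Lin.

Definition span_code (m n k : nat) (Y : gens m n k) : {set mat m n} :=
  [set lincomb Y c | c : {ffun 'I_k -> F2}].

Definition in_ball (m n : nat) (p : R) (X Z : mat m n) : bool :=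
  if Rle_dec (INR (rk_diff X Z)) (p * INR n) then true else false.

Definition L_C (m n : nat) (p : R) (C : {set mat m n}) (X : mat m n) : nat :=
  #|[set Z in C | in_ball p X Z]|.

Definition A_C (m n : nat) (p eps : R) (C : {set mat m n}) (X : mat m n) : R :=
  Rpower 2 (eps / (1 + eps) * INR n * INR (L_C p C X)).

Definition S_C (m n : nat) (p eps : R) (C : {set mat m n}) : R :=
  (\big[Rplus/0%R]_(X : mat m n) A_C p eps C X) / INR #|{: mat m n}|.

Definition good (m n k : nat) (p eps : R) (Y : gens m n k) : bool :=
  if Rle_dec (S_C p eps (span_code Y)) 2 then true else false.

Definition prob_good (m n k : nat) (p eps : R) : R :=
  INR #|[set Y : gens m n k | good p eps Y]| / INR #|{: gens m n k}|.

(* Main.v *)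
Require Import Defs.
From mathcomp Require Import all_boot all_order all_algebra all_field.
From Stdlib Require Import Reals.
From Stdlib Require Import Lra Psatz.
From mathcomp Require Import zify.
Set Implicit Arguments. Unset Strict Implicit. Unset Printing Implicit Defensive.

Module Part1.
Import GRing.Theory.

Lemma card_bigcup_le (T I : finType) (P : pred I) (F : I -> {set T}) :
  leq #|\bigcup_(i | P i) F i| (\sum_(i | P i) #|F i|).
Proof.
elim/big_rec2: _ => [|i s A _ H]; first by rewrite cards0. apply: leq_trans (leq_card_setU _ _).1 _.
by rewrite leq_add2l.
Qed.

Section Ball.
Variables m n : nat.
Local Open Scope ring_scope.


Lemma rank_decomp (W : 'M[F2]_(m,n)) : exists f : {ffun 'I_(\rank W) -> 'I_m},
  exists A : 'M[F2]_(m, \rank W), exists B : 'M[F2]_(\rank W, n),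
  injective f /\ (rowsub f A = 1%:M) /\ (W = A *m B)%R.
Proof.
set f := maxrankfun W; set B := rowsub f W.
have WB : (W <= B)%MS by rewrite /B eq_maxrowsub submx_refl.
exists f, (W *m pinvmx B), B; split; first exact: maxrankfun_inj.
split; last by rewrite mulmxKpV.
apply: (row_free_inj (maxrowsub_free W)).
by rewrite mul_rowsub_mx mulmxKpV // mul1mx.
Qed.

Definition SA r (f : {ffun 'I_r -> 'I_m}) : {set 'M[F2]_(m, r)} :=
  [set A | injectiveb f && (rowsub f A == 1%:M)].

Lemma card_SA (r : nat) (f : {ffun 'I_r -> 'I_m}) : leq #|SA f| (expn 2 (muln (subn m r) r)).
Proof.
have [finj|nfinj] := boolP (injectiveb f); last first.
  rewrite (_ : SA f = set0) ?cards0 //; apply/setP => A.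
  by rewrite !inE (negbTE nfinj).
pose phi (A : 'M[F2]_(m, r)) : {ffun {i : 'I_m | i \notin codom f} -> 'rV[F2]_r} :=
  [ffun i => row (val i) A].
rewrite -(card_in_imset (f := phi)); last first.
  move=> A1 A2; rewrite !inE finj /= => /eqP H1 /eqP H2 Hphi.
  apply/row_matrixP => i.
  have [/codomP [j ->]|ni] := boolP (i \in codom f).
    by rewrite -!row_rowsub H1 H2.
  by move: Hphi => /ffunP /(_ (exist _ i ni)); rewrite !ffunE.
apply: (leq_trans (max_card _)).
rewrite card_ffun card_mx card_Fp // mul1n card_sig -expnM mulnC.
have -> : #|[pred x | x \notin codom f]| = subn m r.
  have := cardC (mem (codom f)); rewrite card_codom; last exact/injectiveP.
  have -> : #|[predC codom f]| = #|[pred x | x \notin codom f]|.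
    by apply: eq_card => x; rewrite !inE.
  rewrite !card_ord; lia.
by [].
Qed.

Lemma count_rank (r : nat) : leq #|[set W : 'M[F2]_(m,n) | \rank W == r]|
   (muln (expn m r) (muln (expn 2 (muln r n)) (expn 2 (muln (subn m r) r)))).
Proof.
apply: (@leq_trans #|\bigcup_(f : {ffun 'I_r -> 'I_m})
   ((fun AB : 'M[F2]_(m,r) * 'M[F2]_(r,n) => AB.1 *m AB.2) @: setX (SA f) [set: 'M[F2]_(r,n)])|).
  apply: subset_leq_card; apply/subsetP => W; rewrite inE => /eqP Hr.
  subst r; have [f [A [B [fi [HA HW]]]]] := rank_decomp W.
  apply/bigcupP; exists f => //; apply/imsetP; exists (A, B); last by [].
  rewrite !inE HA eqxx !andbT; exact/injectiveP.
apply: leq_trans (card_bigcup_le _ _) _.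
apply: (@leq_trans (\sum_(f : {ffun 'I_r -> 'I_m}) muln (expn 2 (muln (subn m r) r)) (expn 2 (muln r n)))%nat).
  apply: leq_sum => f _; apply: leq_trans (leq_imset_card _ _) _.
  rewrite cardsX cardsT card_mx card_Fp // leq_mul2r card_SA orbT //.
rewrite sum_nat_const card_ffun !card_ord mulnC (mulnC (expn 2 (muln (subn m r) r))) [X in leq X _]mulnC; exact: leqnn.
Qed.

Lemma card_lowrank (P : pred nat) :
  leq #|[set W : 'M[F2]_(m,n) | P (\rank W)]|
   (\sum_(r < n.+1 | P r) muln (expn m r) (muln (expn 2 (muln r n)) (expn 2 (muln (subn m r) r))))%nat.
Proof.
apply: (@leq_trans #|\bigcup_(r < n.+1 | P r) [set W : 'M[F2]_(m,n) | \rank W == r]|).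
  apply: subset_leq_card; apply/subsetP => W; rewrite inE => HP.
  have Hr : (\rank W < n.+1)%nat by rewrite ltnS rank_leq_col.
  by apply/bigcupP; exists (Ordinal Hr) => //; rewrite inE.
apply: leq_trans (card_bigcup_le _ _) _.
by apply: leq_sum => r _; apply: count_rank.
Qed.
End Ball.

End Part1.
Import Part1.

Module Part2.
Import GRing.Theory.

Section Indep.
Variables m n : nat.
Local Open Scope ring_scope.

Definition indep d (z : {ffun 'I_d -> mat m n}) :=
  forall v : 'rV[F2]_d, \sum_i v 0 i *: z i = 0 -> v = 0.

Lemma greedy (s : seq (mat m n)) :
  exists X, {subset X <= s} /\ free X /\ (<<s>> = <<X>>)%VS.
Proof.
elim: s => [|v s [X [HX [fX eX]]]].
  by exists [::]; split => //; split => //; exact: nil_free.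
have [Hv|Hv] := boolP (v \in <<X>>%VS).
  exists X; split; first by move=> x /HX xs; rewrite inE xs orbT.
  split => //; rewrite span_cons eX; apply/addv_idPr; by rewrite -memvE.
exists (v :: X); split.
  by move=> x; rewrite !inE => /orP [->|/HX ->] //; rewrite orbT.
by split; [rewrite free_cons Hv fX | rewrite !span_cons eX].
Qed.

Lemma extract (V : {set mat m n}) d : (leq (expn 2 d) #|V|) ->
  exists z : {ffun 'I_d -> mat m n}, (forall i, z i \in V) /\ indep z.
Proof.
move=> HV.
have [X [HX [fX eX]]] := greedy (enum V).
have dX : leq d (size X).
  rewrite -(@leq_exp2l 2) //; apply: leq_trans HV _.
  have -> : expn 2 (size X) = #|<<X>>%VS|.
    by rewrite card_vspace card_Fp // (eqP fX).
  apply: subset_leq_card; apply/subsetP => x xV.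
  by rewrite -eX memv_span // mem_enum.
exists [ffun i : 'I_d => X`_i]; split.
  move=> i; rewrite ffunE -mem_enum; apply: HX; apply: mem_nth.
  exact: leq_trans (ltn_ord i) dX.
move=> v Hv.
destruct d as [|d']; first by apply/rowP => -[].
pose k := fun j : 'I_(size X) => if (j < d'.+1)%nat then v 0 (inord j) else 0.
have Hk : \sum_(j < size X) k j *: X`_j = 0.
  rewrite (bigID (fun j : 'I_(size X) => (j < d'.+1)%nat)) /= addrC big1; last first.
    by move=> j /negbTE Hj; rewrite /k Hj scale0r.
  rewrite add0r -[X in _ = X]Hv (eq_bigr (fun i : 'I_d'.+1 => v 0 (inord i) *: X`_i)); last first.
    by move=> i _; rewrite ffunE inord_val.
  rewrite (big_ord_widen (size X) (fun j => v 0 (inord j) *: X`_j)) //.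
  apply: eq_bigr => j Hj; by rewrite /k Hj.
have H0 : forall j, k j = 0.
  by move: k Hk; apply/(freeP (X := in_tuple X)).
 apply/rowP => i; rewrite mxE.
have := H0 (widen_ord dX i); rewrite /k /= ltn_ord.
by have -> : inord (widen_ord dX i) = i by apply: val_inj; rewrite /= inordK.
Qed.
End Indep.

End Part2.
Import Part2.

Module Part3.
Import GRing.Theory.

Section Fib.
Variables m n k d : nat.
Local Open Scope ring_scope.

Definition Fib (c : {ffun 'I_d -> {ffun 'I_k -> F2}}) (z : {ffun 'I_d -> mat m n}) :
  {set gens m n k} := [set Y | [forall i, lincomb Y (c i) == z i]].

Lemma lincombD (Y1 Y2 : gens m n k) c : lincomb (Y1 + Y2) c = lincomb Y1 c + lincomb Y2 c.
Proof. by rewrite /lincomb -big_split; apply: eq_bigr => i _; rewrite ffunE scalerDr. Qed.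

Lemma lincombN (Y : gens m n k) c : lincomb (- Y) c = - lincomb Y c.
Proof. by rewrite /lincomb -sumrN; apply: eq_bigr => i _; rewrite ffunE scalerN. Qed.

Lemma lincomb_sum (Y : gens m n k) (v : 'rV[F2]_d) c :
  \sum_i v 0 i *: lincomb Y (c i) = lincomb Y [ffun j => \sum_i v 0 i * c i j].
Proof.
rewrite /lincomb; under eq_bigr do rewrite scaler_sumr.
rewrite exchange_big; apply: eq_bigr => j _; rewrite ffunE scaler_suml.
by apply: eq_bigr => i _; rewrite scalerA.
Qed.

Lemma card_Fib c z : indep z ->
  leq (muln #|Fib c z| #|{: {ffun 'I_d -> mat m n}}|) #|{: gens m n k}|.
Proof.
move=> Hz; have [->|[Y0 HY0]] := set_0Vmem (Fib c z); first by rewrite cards0.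
move: HY0; rewrite inE => /forallP HY0.
pose Cm := \matrix_(i < d, j < k) c i j.
have fC : row_free Cm.
  apply: inj_row_free => v Hv; apply: Hz.
  transitivity (\sum_i v 0 i *: lincomb Y0 (c i)).
    by apply: eq_bigr => i _; rewrite (eqP (HY0 i)).
  rewrite lincomb_sum /lincomb big1 // => j _.
  have : (v *m Cm) 0 j = 0 by rewrite Hv mxE.
  rewrite !mxE => Hj.
  rewrite ffunE (_ : \sum_i v 0 i * c i j = 0) ?scale0r //.
  by apply: etrans Hj; apply: eq_bigr => i _; rewrite ?mxE.
case/row_freeP: fC => D HD.
pose Y1 (z' : {ffun 'I_d -> mat m n}) : gens m n k := [ffun j => \sum_l D j l *: z' l].
have HY1 z' i : lincomb (Y1 z') (c i) = z' i.
  rewrite /lincomb; under eq_bigr do rewrite ffunE scaler_sumr.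
  rewrite exchange_big /=.
  transitivity (\sum_l (Cm *m D) i l *: z' l).
    apply: eq_bigr => l _; rewrite mxE scaler_suml.
    by apply: eq_bigr => j _; rewrite scalerA mxE.
  rewrite HD (bigD1 i) //= big1 ?addr0; first by rewrite mxE eqxx scale1r.
  by move=> l Hl; rewrite mxE eq_sym (negbTE Hl) scale0r.
have Hlin Y z' i : lincomb (Y - Y0 + Y1 z') (c i) = lincomb Y (c i) - z i + z' i.
  by rewrite lincombD lincombD lincombN HY1 (eqP (HY0 i)).
pose psi (p : {ffun 'I_d -> mat m n} * gens m n k) := p.2 - Y0 + Y1 p.1.
rewrite mulnC -cardsT -cardsX -(card_in_imset (f := psi)); first exact: max_card.
move=> [z1 Ya] [z2 Yb]; rewrite !inE /= => /forallP Ha /forallP Hb E.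
have Ez : z1 = z2.
  apply/ffunP => i; have := congr1 (fun Y => lincomb Y (c i)) E.
  by rewrite /psi /= !Hlin (eqP (Ha i)) (eqP (Hb i)) !subrr !add0r.
subst z2; congr pair; move: E; rewrite /psi /= => /addIr /addIr ->.
by [].
Qed.
End Fib.

End Part3.
Import Part3.

Module Part4.
Import GRing.Theory.

Section Bad.
Variables (m n k d : nat) (p : R).
Local Open Scope ring_scope.

Definition Ball (X : mat m n) : {set mat m n} := [set Z | in_ball p X Z].

Definition indepb (z : {ffun 'I_d -> mat m n}) :=
  [forall v : 'rV[F2]_d, (\sum_i v 0 i *: z i == 0) ==> (v == 0)].

Definition bad : {set gens m n k} :=
  [set Y | [exists X, leq (expn 2 d) #|Ball X :&: span_code Y|]].

Definition Sz X := [set z : {ffun 'I_d -> mat m n} | [forall i, z i \in Ball X] && indepb z].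

Lemma bad_sub : bad \subset \bigcup_(X : mat m n) \bigcup_(z in Sz X)
   \bigcup_(c : {ffun 'I_d -> {ffun 'I_k -> F2}}) Fib c z.
Proof.
apply/subsetP => Y; rewrite inE => /existsP [X HX].
have [z [Hz1 Hz2]] := extract HX.
have : forall i, exists c, lincomb Y c = z i.
  move=> i; have := Hz1 i; rewrite inE => /andP [_ /imsetP [c _ ->]].
  by exists c.
case/fin_all_exists => c Hc.
apply/bigcupP; exists X => //; apply/bigcupP; exists z.
  rewrite inE; apply/andP; split.
    by apply/forallP => i; have := Hz1 i; rewrite inE => /andP [].
  apply/forallP => v; apply/implyP => /eqP H; apply/eqP; exact: Hz2.
apply/bigcupP; exists [ffun i => c i] => //.
by rewrite inE; apply/forallP => i; rewrite ffunE Hc.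
Qed.

Lemma indepbP z : indepb z -> indep z.
Proof. by move=> /forallP H v Hv; apply/eqP; move: (H v) => /implyP; apply; apply/eqP. Qed.

Lemma card_bad (BB : nat) : (forall X, leq #|Ball X| BB) ->
  leq (muln #|bad| #|{: {ffun 'I_d -> mat m n}}|)
   (muln (muln #|{: mat m n}| (expn BB d)) (muln #|{: {ffun 'I_d -> {ffun 'I_k -> F2}}}| #|{: gens m n k}|)).
Proof.
move=> HB.
apply: leq_trans (leq_mul (subset_leq_card bad_sub) (leqnn _)) _.
apply: leq_trans (leq_mul (card_bigcup_le _ _) (leqnn _)) _.
rewrite big_distrl /=.
apply: (@leq_trans (\sum_(X : mat m n) muln (expn BB d) (muln #|{: {ffun 'I_d -> {ffun 'I_k -> F2}}}| #|{: gens m n k}|))%nat); last first.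
  by rewrite sum_nat_const mulnA.
apply: leq_sum => X _.
apply: leq_trans (leq_mul (card_bigcup_le _ _) (leqnn _)) _.
rewrite big_distrl /=.
apply: (@leq_trans (\sum_(z in Sz X) muln #|{: {ffun 'I_d -> {ffun 'I_k -> F2}}}| #|{: gens m n k}|)%nat).
  apply: leq_sum => z Hz.
  apply: leq_trans (leq_mul (card_bigcup_le _ _) (leqnn _)) _.
  rewrite big_distrl /=.
  apply: (@leq_trans (\sum_(c : {ffun 'I_d -> {ffun 'I_k -> F2}}) #|{: gens m n k}|)%nat); last by rewrite sum_nat_const.
  apply: leq_sum => c _.
  apply: card_Fib; apply: indepbP; by move: Hz; rewrite inE => /andP [].
rewrite sum_nat_const leq_mul2r; apply/orP; right.
apply: (@leq_trans #|ffun_on (Ball X)|).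
  apply: subset_leq_card; apply/subsetP => z; rewrite inE => /andP [/forallP H _].
  by apply/ffun_onP.
rewrite card_ffun_on card_ord; elim: (d) => [|e IH] //; rewrite !expnS leq_mul //.
Qed.
End Bad.

End Part4.
Import Part4.

Module PartR1.

Lemma Rsum_le (I : finType) (f g : I -> R) : (forall i, f i <= g i)%R ->
  (\big[Rplus/0%R]_(i : I) f i <= \big[Rplus/0%R]_(i : I) g i)%R.
Proof.
move=> H; apply: (big_rec2 (fun x y => x <= y)%R); first exact: Rle_refl.
by move=> i x y _ Hxy; apply: Rplus_le_compat.
Qed.

Lemma Rsum_aff (I : finType) (a M : R) (h : I -> nat) :
  \big[Rplus/0%R]_(i : I) (a + M * INR (h i))%R = (a * INR #|I| + M * INR (\sum_(i : I) h i))%R.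
Proof.
rewrite -sum1_card.
apply: (big_rec3 (fun x y z => x = a * INR y + M * INR z)%R); first by simpl; ring.
by move=> i x y z _ ->; rewrite !plus_INR; simpl; ring.
Qed.

Section SC.
Variables m n : nat.

Lemma SC_le (p eps : R) (C : {set mat m n}) (d B : nat) :
  (0 <= eps)%R -> (forall X : mat m n, ltn (L_C p C X) (expn 2 d)) ->
  (forall Z : mat m n, leq #|[set X | in_ball p X Z]| B) ->
  (S_C p eps C <= 1 + Rpower 2 (eps / (1 + eps) * INR n * INR (expn 2 d))
                     * INR (muln #|C| B) / INR #|{: mat m n}|)%R.
Proof.
move=> He HL HB.
set M := Rpower 2 _.
have e0 : (0 <= eps / (1 + eps) * INR n)%R.
  apply: Rmult_le_pos; last exact: pos_INR.
  apply: Rmult_le_pos => //; apply/Rlt_le/Rinv_0_lt_compat; lra.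
have H1 X : (A_C p eps C X <= 1 + M * INR (L_C p C X != 0%nat))%R.
  rewrite /A_C; case: eqP => [->|HX] /=.
    rewrite Rmult_0_r Rpower_O; lra.
  rewrite Rmult_1_r; apply: Rle_trans (_ : M <= _)%R; last first.
    have : (0 <= 1)%R by lra. lra.
  apply: Rle_Rpower; first lra.
  apply: Rmult_le_compat_l => //; apply: le_INR; apply/leP; exact: ltnW (HL X).
have Hcnt : leq (\sum_(X : mat m n) (L_C p C X != 0%nat)) (muln #|C| B).
  apply: (@leq_trans #|\bigcup_(Z in C) [set X | in_ball p X Z]|).
    rewrite -sum1_card [X in leq _ X]big_mkcond /=.
    apply: leq_sum => X _; case: ifP => [_|Hn]; first by case: (_ != _).
    rewrite leqn0 eqb0 negbK; apply/negPn/negP => HL0; have Hpos : (0 < L_C p C X)%N by rewrite lt0n.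
    move: Hpos; rewrite /L_C card_gt0 => /set0Pn [Z]; rewrite inE => /andP [ZC HZ].
    move: Hn => /negbT /negP []; apply/bigcupP; exists Z => //; rewrite inE. exact: HZ.
  apply: leq_trans (card_bigcup_le _ _) _.
  rewrite -sum_nat_const; exact: leq_sum.
have Hc : (0 < INR #|{: mat m n}|)%R.
  apply: lt_0_INR; apply/ltP; rewrite card_mx card_Fp //; exact: expn_gt0.
rewrite /S_C.
apply (Rle_trans _ ((INR #|{: mat m n}| + M * INR (muln #|C| B)) / INR #|{: mat m n}|)%R).
  apply: Rmult_le_compat_r; first by apply/Rlt_le/Rinv_0_lt_compat.
  apply: (Rle_trans _ _ _ (Rsum_le H1)).
  rewrite Rsum_aff Rmult_1_l; apply: Rplus_le_compat_l.
  apply: Rmult_le_compat_l; first by apply/Rlt_le/exp_pos.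
  by apply: le_INR; apply/leP.
right; field; lra.
Qed.
End SC.

End PartR1.
Import PartR1.

Module PartR2.

Lemma INR_expn a b : INR (expn a b) = (INR a ^ b)%R.
Proof. elim: b => [|b IH]; first by rewrite expn0. by rewrite expnS mulnE mult_INR IH. Qed.

Lemma INR_muln a b : INR (muln a b) = (INR a * INR b)%R.
Proof. by rewrite mulnE mult_INR. Qed.

Lemma INR_addn a b : INR (addn a b) = (INR a + INR b)%R.
Proof. by rewrite addnE plus_INR. Qed.

Lemma ln2_pos : (0 < ln 2)%R.
Proof. have := ln_lt_2; lra. Qed.

Lemma Pow_nat e : INR (expn 2 e) = Rpower 2 (INR e).
Proof. by rewrite INR_expn Rpower_pow; [|lra]. Qed.

Lemma Pow_pos x : (0 < Rpower 2 x)%R.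
Proof. exact: exp_pos. Qed.

Lemma Pow_le x y : (x <= y)%R -> (Rpower 2 x <= Rpower 2 y)%R.
Proof. by move=> H; apply: Rle_Rpower => //; lra. Qed.

Lemma Pow_pow x d : (Rpower 2 x ^ d)%R = Rpower 2 (INR d * x).
Proof. rewrite -Rpower_pow; [by rewrite Rpower_mult Rmult_comm | exact: exp_pos]. Qed.

Lemma INR_sum_le (N : nat) (P : pred nat) (f : nat -> nat) (T : R) :
  (0 <= T)%R -> (forall r, (r < N)%N -> P r -> (INR (f r) <= T)%R) ->
  (INR (\sum_(r < N | P r) f r) <= INR N * T)%R.
Proof.
move=> T0; rewrite big_mkcond /=.
elim: N => [|N IH] H; first by rewrite big_ord0 /=; lra.
rewrite big_ord_recr INR_addn S_INR.
have H1 : (INR (\sum_(i < N) (if P i then f i else O)) <= INR N * T)%R.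
  by apply: IH => r Hr; apply: H; apply: (ltn_trans Hr).
have H2 : (INR (if P N then f N else O) <= T)%R.
  by case: ifP => HP; [apply: H | simpl; lra].
apply: (Rle_trans _ (INR N * T + T)); last lra.
apply: Rplus_le_compat; [exact: H1 | exact: H2].
Qed.

Definition BB0 (m n : nat) (p : R) : nat :=
  (\sum_(r < n.+1 | if Rle_dec (INR r) (p * INR n) then true else false)
     muln (expn m r) (muln (expn 2 (muln r n)) (expn 2 (muln (subn m r) r))))%nat.

Lemma BB0_real m n p : (n < m)%N -> (0 <= p <= 1)%R ->
  (INR (BB0 m n p) <= INR n.+1 * (INR m ^ n * Rpower 2 (p * INR n * (INR m + INR n - p * INR n))))%R.
Proof.
move=> Hnm Hp; rewrite /BB0; apply: (@INR_sum_le n.+1 (fun r => if Rle_dec (INR r) (p * INR n) then true else false) (fun r => muln (expn m r) (muln (expn 2 (muln r n)) (expn 2 (muln (subn m r) r))))).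

  apply: Rmult_le_pos; [apply: pow_le; exact: pos_INR | apply/Rlt_le/Pow_pos].
move=> r Hr; case: Rle_dec => // Hrp _.
have rn : (r <= n)%N by rewrite -ltnS.
have rm : (r <= m)%N by apply: leq_trans rn (ltnW Hnm).
have Hm1 : (1 <= INR m)%R.
  have : (1 <= m)%N by apply: leq_ltn_trans Hnm.
  by move/leP/le_INR.
have Hrn : (INR r <= INR n)%R by apply/le_INR/leP.
have Hnm' : (INR n + 1 <= INR m)%R by rewrite -S_INR; apply/le_INR/leP.
rewrite INR_muln INR_muln !Pow_nat INR_expn -Rpower_plus.
apply: Rmult_le_compat.
- apply: pow_le; exact: pos_INR.
- apply/Rlt_le/Pow_pos.
- by apply: Rle_pow => //; apply/leP.
- apply: Pow_le; rewrite !INR_muln minus_INR; last exact/leP.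
  have Hr0 : (0 <= INR r)%R by apply: pos_INR.
  have Hpn : (p * INR n <= INR n)%R.
    have := pos_INR n; move: Hp => [Hp0 Hp1] Hn0.
    have := Rmult_le_compat_r (INR n) p 1 Hn0 Hp1; lra.
  have E : (p * INR n * (INR m + INR n - p * INR n) - (INR r * INR n + (INR m - INR r) * INR r)
           = (p * INR n - INR r) * (INR m + INR n - p * INR n - INR r))%R by ring.
  have : (0 <= (p * INR n - INR r) * (INR m + INR n - p * INR n - INR r))%R.
    apply: Rmult_le_pos; lra.
  lra.
Qed.

Lemma eventually_sq (eps : R) : (0 < eps)%R -> exists M0 : nat, forall m : nat,
  (M0 <= m)%N -> (INR m * INR m <= Rpower 2 (eps * INR m / 2))%R.
Proof.
move=> he.
set c0 := (eps * ln 2 / 2)%R.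
have c0p : (0 < c0)%R by rewrite /c0; have := ln2_pos; move=> h; apply: Rmult_lt_0_compat; [apply: Rmult_lt_0_compat|]; lra.
have [M0 HM0] := INR_unbounded (16 / (c0 * c0)).
exists M0 => m Hm.
have Hx : (16 / (c0 * c0) < INR m)%R.
  apply: Rlt_le_trans HM0 _; exact/le_INR/leP.
set x := INR m in Hx *.
have c02 : (0 < c0 * c0)%R by apply: Rmult_lt_0_compat.
have H16 : (0 < 16 / (c0 * c0))%R by apply: Rdiv_lt_0_compat; lra.
have xp : (0 < x)%R by lra.
set u := (c0 * c0 * x)%R.
have Hu : (16 < u)%R.
  rewrite /u; have := Rmult_lt_compat_l (c0 * c0) _ _ c02 Hx.
  by rewrite /Rdiv -Rmult_assoc (Rmult_comm (c0 * c0)) Rmult_assoc Rinv_r ?Rmult_1_r; lra.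
set y := (c0 * x / 4)%R.
have yp : (0 <= y)%R by rewrite /y; apply: Rmult_le_pos; [apply: Rmult_le_pos|]; lra.
have Ey : (exp y >= y)%R by have := exp_ineq1_le y; lra.
have -> : Rpower 2 (eps * x / 2) = (exp y * exp y * exp y * exp y)%R.
  rewrite /Rpower -!exp_plus; f_equal; rewrite /y /c0; field.
have Hy4 : (y * y * y * y <= exp y * exp y * exp y * exp y)%R.
  have ey : (y <= exp y)%R by lra.
  have h2 : (y * y <= exp y * exp y)%R by apply: Rmult_le_compat.
  have y2 : (0 <= y * y)%R by apply: Rmult_le_pos.
  have h3 : (y * y * y <= exp y * exp y * exp y)%R by apply: Rmult_le_compat.
  have y3 : (0 <= y * y * y)%R by apply: Rmult_le_pos.
  by apply: Rmult_le_compat.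
apply: Rle_trans Hy4.
have -> : (y * y * y * y = x * x * (u * u / 256))%R by rewrite /y /u; field.
have Huu : (1 <= u * u / 256)%R.
  have : (256 <= u * u)%R by nra.
  lra.
have := Rmult_le_compat_l (x * x) _ _ (Rlt_le _ _ (Rmult_lt_0_compat _ _ xp xp)) Huu.
lra.
Qed.

End PartR2.
Import PartR2.

Module PartR3.

Lemma ball_card m n p (X : mat m n) : leq #|Ball p X| (BB0 m n p).
Proof.
apply: leq_trans (card_lowrank m n (fun r => if Rle_dec (INR r) (p * INR n) then true else false)).
have inj : injective (fun Z : mat m n => GRing.add X (GRing.opp Z)).
  by move=> Z1 Z2 /= /GRing.addrI /GRing.oppr_inj.
rewrite -[#|Ball p X|](card_imset _ inj); apply: subset_leq_card; apply/subsetP => W; case/imsetP => Z HZ ->.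
by rewrite inE; rewrite inE in HZ.
Qed.

Lemma rball_card m n p (Z : mat m n) : leq #|[set X | in_ball p X Z]| (BB0 m n p).
Proof.
apply: leq_trans (card_lowrank m n (fun r => if Rle_dec (INR r) (p * INR n) then true else false)).
have inj : injective (fun X : mat m n => GRing.add X (GRing.opp Z)).
  by move=> Z1 Z2 /= /GRing.addIr.
rewrite -[#|[set X | in_ball p X Z]|](card_imset _ inj); apply: subset_leq_card; apply/subsetP => W; case/imsetP => X HX ->.
by rewrite inE; rewrite inE in HX.
Qed.

Lemma code_card m n k (Y : gens m n k) : leq #|span_code Y| (expn 2 k).
Proof.
apply: leq_trans (leq_imset_card _ _) _.
by rewrite card_ffun card_Fp // card_ord.
Qed.

Lemma L_C_eq m n p (C : {set mat m n}) X : L_C p C X = #|Ball p X :&: C|.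
Proof. by apply: eq_card => Z; rewrite !inE andbC. Qed.

Lemma card_mat m n : INR #|{: mat m n}| = Rpower 2 (INR m * INR n).
Proof. by rewrite card_mx card_Fp // Pow_nat INR_muln. Qed.

Lemma card_ffun_pow (I : finType) (T : finType) (e : R) :
  INR #|T| = Rpower 2 e -> INR #|{: {ffun I -> T}}| = Rpower 2 (INR #|I| * e).
Proof. by move=> H; rewrite card_ffun INR_expn H Pow_pow. Qed.

End PartR3.
Import PartR3.


Theorem lemma5 (p eps : R) (hp0 : (0 < p)%R) (hp1 : (p < 1)%R) (heps : (0 < eps)%R) :
  exists c : R, (0 < c)%R /\
  exists N : nat, forall m n k : nat,
    (N <= n)%N -> (n < m)%N ->
    INR k = (((1 - p) * (1 - (INR n / INR m) * p) - eps) * INR m * INR n)%R ->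
    (1 - exp (- (c * INR n)) <= prob_good m n k p eps)%R.
Proof.
have [d Hd] := INR_unbounded (4 / eps).
have [M0 HM0] := eventually_sq heps.
exists (ln 2); split; first exact: ln2_pos.
exists (maxn (maxn M0 (expn 2 d.+1)) 1) => m n k HN Hnm Hk.
have n1 : (1 <= n)%coq_nat by apply/leP; apply: leq_trans HN; rewrite leq_max leqnn orbT.
have hM0 : leq M0 m by apply: leq_trans (ltnW Hnm); apply: leq_trans HN; rewrite !leq_max leqnn.
have hd : leq (expn 2 d.+1) m by apply: leq_trans (ltnW Hnm); apply: leq_trans HN; rewrite !leq_max leqnn orbT.
have nR1 : (1 <= INR n)%R by apply: (le_INR 1).
have mRn : (INR n + 1 <= INR m)%R by rewrite -S_INR; apply/le_INR/leP.
set mR := INR m in mRn *; set nR := INR n in nR1 mRn *.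
have mR0 : (0 < mR)%R by lra.
set NR := (mR * nR)%R.
have NRn : (nR <= NR)%R by rewrite /NR; have := Rmult_le_compat_r nR 1 mR ltac:(lra) ltac:(lra); lra.
set BB := BB0 m n p.
have hp : (0 <= p <= 1)%R by lra.
have HBB : (INR BB <= INR n.+1 * (mR ^ n * Rpower 2 (p * nR * (mR + nR - p * nR))))%R := BB0_real Hnm hp.
have H2n : (INR n.+1 * mR ^ n <= Rpower 2 (eps * NR / 2))%R.
  have e1 : (INR n.+1 <= mR)%R by rewrite S_INR -/nR; lra.
  apply: Rle_trans (_ : mR * mR ^ n <= _)%R.
    apply: Rmult_le_compat_r => //; apply: pow_le; lra.
  have -> : (mR * mR ^ n = mR ^ n.+1)%R by [].
  apply: Rle_trans (_ : mR ^ (2 * n) <= _)%R.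
    apply: Rle_pow; first lra.
    by apply/leP; move/leP: n1 => n1'; rewrite mul2n -addnn -add1n leq_add2r.
  rewrite pow_mult.
  have -> : (mR ^ 2 = mR * mR)%R by simpl; ring.
  apply: Rle_trans (_ : Rpower 2 (eps * mR / 2) ^ n <= _)%R.
    apply: pow_incr; split; [apply: Rmult_le_pos; lra | exact: HM0].
  rewrite Pow_pow; right; f_equal.
  rewrite /NR /nR /mR; field.
have Hkey : (INR k + p * nR * (mR + nR - p * nR) = NR - eps * NR)%R.
  rewrite Hk /NR /nR /mR; field; move: mR0; rewrite /mR; lra.
have HQ : (INR (expn 2 k) * INR BB <= Rpower 2 (NR - eps * NR / 2))%R.
  rewrite Pow_nat.
  apply: Rle_trans (_ : Rpower 2 (INR k) * (Rpower 2 (eps * NR / 2) * Rpower 2 (p * nR * (mR + nR - p * nR))) <= _)%R.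
    apply: Rmult_le_compat_l; first by apply/Rlt_le/Pow_pos.
    apply: Rle_trans HBB _; rewrite -Rmult_assoc.
    apply: Rmult_le_compat_r; [apply/Rlt_le/Pow_pos | exact: H2n].
  rewrite -!Rpower_plus; apply: Pow_le; lra.
have Hgood : forall Y : gens m n k, Y \notin bad m n k d p -> good p eps Y.
  move=> Y HY.
  have HL : forall X, ltn (L_C p (span_code Y) X) (expn 2 d).
    move=> X; case: (leqP (expn 2 d) (L_C p (span_code Y) X)) => // H.
    exfalso; move/negP: HY; apply; rewrite inE; apply/existsP; exists X.
    by rewrite -L_C_eq.
  have HS := SC_le (Rlt_le _ _ heps) HL (@rball_card m n p).
  rewrite /good; case: Rle_dec => // Hn; exfalso; apply: Hn; apply: Rle_trans HS _.
  have HC : (INR (muln #|span_code Y| BB) <= Rpower 2 (NR - eps * NR / 2))%R.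
    apply: Rle_trans HQ; rewrite INR_muln; apply: Rmult_le_compat_r; first exact: pos_INR.
    by apply/le_INR/leP/code_card.
  have Hd2 : (2 * INR (expn 2 d) <= mR)%R.
    by rewrite -(INR_muln 2 (expn 2 d)) -expnS; apply/le_INR/leP.
  have He : (eps / (1 + eps) <= eps)%R.
    have : (eps / (1 + eps) * (1 + eps) = eps)%R by field; lra.
    have : (0 < eps / (1 + eps))%R by apply: Rdiv_lt_0_compat; lra.
    nra.
  have He0 : (0 <= eps / (1 + eps))%R by apply/Rlt_le/Rdiv_lt_0_compat; lra.
  have Hexp : (eps / (1 + eps) * nR * INR (expn 2 d) <= eps * NR / 2)%R.
    have h1 : (0 <= INR (expn 2 d))%R by apply: pos_INR.
    have h2 : (eps / (1 + eps) * nR * INR (expn 2 d) <= eps * nR * INR (expn 2 d))%R.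
      apply: Rmult_le_compat_r => //; apply: Rmult_le_compat_r; lra.
    have h3 : (eps * nR * (2 * INR (expn 2 d)) <= eps * nR * mR)%R.
      apply: Rmult_le_compat_l => //; apply: Rmult_le_pos; lra.
    rewrite /NR; lra.
  rewrite card_mat -/mR -/nR -/NR.
  have HP := Pow_pos NR.
  have : (Rpower 2 (eps / (1 + eps) * nR * INR (expn 2 d)) * INR (muln #|span_code Y| BB) <= Rpower 2 NR)%R.
    apply: Rle_trans (_ : Rpower 2 (eps / (1 + eps) * nR * INR (expn 2 d)) * Rpower 2 (NR - eps * NR / 2) <= _)%R.
      apply: Rmult_le_compat_l => //; apply/Rlt_le/Pow_pos.
    rewrite -Rpower_plus; apply: Pow_le; lra.
  move=> H; have : ((Rpower 2 (eps / (1 + eps) * nR * INR (expn 2 d)) * INR (muln #|span_code Y| BB)) / Rpower 2 NR <= 1)%R.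
    by apply/(Rmult_le_reg_r (Rpower 2 NR)) => //; field_simplify; lra.
  rewrite -/BB; lra.
have Hbad := @card_bad m n k d p BB (@ball_card m n p).
move/leP/le_INR: Hbad; rewrite !INR_muln INR_expn.
have cF2 : INR #|F2| = Rpower 2 1 by rewrite card_Fp // Rpower_1 //; simpl; lra.
rewrite (card_ffun_pow _ (card_mat m n)) (card_ffun_pow _ (card_ffun_pow _ cF2)).
rewrite (card_ffun_pow _ (card_mat m n)) !card_ord card_mat -/mR -/nR -/NR.
move=> Hbad.
have HQd : (INR BB ^ d * Rpower 2 (INR d * (INR k * 1)) <= Rpower 2 (INR d * (NR - eps * NR / 2)))%R.
  rewrite Rmult_1_r -Pow_pow -Pow_pow -Rpow_mult_distr Rmult_comm -Pow_nat.
  apply: pow_incr; split; last exact: HQ.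
  by apply: Rmult_le_pos; apply: pos_INR.
have Hde : (4 * NR <= INR d * eps * NR)%R.
  have : (4 < INR d * eps)%R.
    have := Rmult_lt_compat_r eps _ _ heps Hd.
    by rewrite /Rdiv Rmult_assoc Rinv_l ?Rmult_1_r; lra.
  move=> h; apply: Rmult_le_compat_r; rewrite /NR; [apply: Rmult_le_pos|]; lra.
have HB2 : (INR #|bad m n k d p| <= Rpower 2 (INR k * NR - nR))%R.
  apply: (Rmult_le_reg_r (Rpower 2 (INR d * NR))); first exact: Pow_pos.
  apply: Rle_trans Hbad _.
  apply: Rle_trans (_ : Rpower 2 NR * Rpower 2 (INR d * (NR - eps * NR / 2)) * Rpower 2 (INR k * NR) <= _)%R.
    rewrite Rmult_assoc Rmult_assoc; apply: Rmult_le_compat_l; first by apply/Rlt_le/Pow_pos.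
    rewrite -Rmult_assoc; apply: Rmult_le_compat_r; first by apply/Rlt_le/Pow_pos.
    exact: HQd.
  rewrite -!Rpower_plus; apply: Pow_le; lra.
set goodS := [set Y : gens m n k | good p eps Y].
have Hc := cardsC goodS.
have Hsub : leq #|~: goodS| #|bad m n k d p|.
  apply: subset_leq_card; apply/subsetP => Y; rewrite inE => HY.
  case: (boolP (Y \in bad m n k d p)) => // H; by move: HY; rewrite inE (Hgood Y H).
move/leP/le_INR: Hsub => Hsub.
have HG : INR #|{: gens m n k}| = Rpower 2 (INR k * NR).
  by rewrite (card_ffun_pow _ (card_mat m n)) card_ord.
rewrite /prob_good -/goodS HG.
have E1 : INR #|goodS| = (INR #|{: gens m n k}| - INR #|~: goodS|)%R.
  by rewrite -Hc plus_INR; ring.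
rewrite E1 HG.
have Hexp : exp (- (ln 2 * nR)) = Rpower 2 (- nR) by rewrite /Rpower; f_equal; ring.
rewrite Hexp.
have HPG := Pow_pos (INR k * NR).
have : (Rpower 2 (INR k * NR - nR) = Rpower 2 (INR k * NR) * Rpower 2 (- nR))%R.
  by rewrite -Rpower_plus.
move=> E2.
apply: (Rmult_le_reg_r (Rpower 2 (INR k * NR))) => //.
field_simplify; try lra.
Qed.
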